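(* For all $n \ge 2$, $l(K_n \,\square\, K_2) \le 5n - 4$.
   Context: All graphs are simple and undirected; $K_n$ is the complete graph on $n$ vertices. Letters $x,y$ alternate in a word $w$ if deleting all other letters from $w$ yields $xyxy\ldots$ or $yxyx\ldots$ (of either parity). A word $w$ over $V(G)$ represents $G$ if every vertex occurs in $w$ and for all distinct $x,y$, $xy\in E(G)$ iff $x,y$ alternate in $w$; $l(G)$ is the minimum length of a word representing $G$. The Cartesian product $G\,\square\,H$ has vertex set $V(G)\times V(H)$, with $(u,v)$ adjacent to $(u',v')$ iff either $u=u'$ and $vv'\in E(H)$, or $v=v'$ and $uu'\in E(G)$. *)

(* Defs.v *)
(* Graphs are symmetric irreflexive relations on a finType. *)
From mathcomp Require Import all_boot.
Set Implicit Arguments. Unset Strict Implicit. Unset Printing Implicit Defensive.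

Definition Kn (n : nat) : rel 'I_n := fun i j => i != j.

Definition cartprod (T U : finType) (eG : rel T) (eH : rel U) : rel (T * U) :=
  fun p q => ((p.1 == q.1) && eH p.2 q.2) || ((p.2 == q.2) && eG p.1 q.1).

Definition alternate (T : eqType) (w : seq T) (x y : T) : bool :=
  let s := [seq z <- w | (z == x) || (z == y)] in
  (s == [seq (if odd i then y else x) | i <- iota 0 (size s)]) ||
  (s == [seq (if odd i then x else y) | i <- iota 0 (size s)]).

Definition represents (T : finType) (e : rel T) (w : seq T) : Prop :=
  (forall x : T, x \in w) /\
  (forall x y : T, x != y -> (e x y <-> alternate w x y)).

(* Main.v *)
Require Import Defs.
From mathcomp Require Import all_boot.
From mathcomp Require Import zify.
Set Implicit Arguments. Unset Strict Implicit. Unset Printing Implicit Defensive.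

Definition Eg (x y : nat * nat) : bool :=
  ((x.1 == y.1) && (x.2 != y.2)) || ((x.2 == y.2) && (x.1 != y.1)).

Definition W (m : seq nat) : seq (nat * nat) :=
  flatten [seq [:: (k,0); (k,1)] | k <- m] ++ [:: (0,0); (0,1); (1,0)] ++
  [seq (k,0) | k <- m] ++ [:: (0,0); (1,1); (1,0)] ++
  flatten [seq [:: (k,1); (k,0)] | k <- m].

Definition alt2 (T : eqType) (s : seq T) (x y : T) : bool :=
  (s == [seq (if odd i then y else x) | i <- iota 0 (size s)]) ||
  (s == [seq (if odd i then x else y) | i <- iota 0 (size s)]).

Lemma alternateE (T : eqType) (w : seq T) x y :
  alternate w x y = alt2 [seq z <- w | (z == x) || (z == y)] x y.
Proof. by []. Qed.

Lemma map_inj_eq (T U : eqType) (f : T -> U) (S : seq T) (s t : seq T) :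
  {in S &, injective f} -> {subset s <= S} -> {subset t <= S} ->
  (map f s == map f t) = (s == t).
Proof.
move=> inj; elim: s t => [|a s IH] [|b t] //= sS tS.
rewrite !eqseq_cons IH; last 2 first.
- by move=> z zs; apply: sS; rewrite inE zs orbT.
- by move=> z zt; apply: tS; rewrite inE zt orbT.
congr (_ && _); apply/eqP/eqP => [|-> //].
by apply: inj; [apply: sS | apply: tS]; rewrite inE eqxx.
Qed.

Lemma alt_map (T U : eqType) (f : T -> U) (s : seq T) x y :
  {in x :: y :: s &, injective f} ->
  alternate (map f s) (f x) (f y) = alternate s x y.
Proof.
move=> inj; rewrite !alternateE /alt2 filter_map.
have Hx : forall z, z \in s -> (f z == f x) = (z == x).
  move=> z zs; apply/eqP/eqP => [|-> //] E; apply: inj => //.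
  by rewrite !inE zs !orbT.
  by rewrite inE eqxx.
have Hy : forall z, z \in s -> (f z == f y) = (z == y).
  move=> z zs; apply/eqP/eqP => [|-> //] E; apply: inj => //.
  by rewrite !inE zs !orbT.
  by rewrite !inE eqxx orbT.
have -> : [seq z <- s | preim f (fun z => (z == f x) || (z == f y)) z] =
          [seq z <- s | (z == x) || (z == y)].
  by apply: eq_in_filter => z zs /=; rewrite Hx // Hy.
set t := [seq z <- s | _].
have tS : {subset t <= x :: y :: s}.
  by move=> z; rewrite mem_filter => /andP[_ zs]; rewrite !inE zs !orbT.
have pS : forall b : bool, {subset [seq (if odd i then (if b then y else x) else (if b then x else y)) | i <- iota 0 (size t)] <= x :: y :: s}.
  move=> b z /mapP[i _ ->]; case: b; case: (odd i); by rewrite !inE eqxx ?orbT.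
rewrite size_map.
have Em : forall b1 b2 : T, [seq (if odd i then f b1 else f b2) | i <- iota 0 (size t)] =
   map f [seq (if odd i then b1 else b2) | i <- iota 0 (size t)].
  by move=> b1 b2; rewrite -map_comp; apply: eq_map => i /=; case: (odd i).
rewrite (Em y x) (Em x y) (map_inj_eq inj tS (pS false)) (map_inj_eq inj tS (pS true)).
by [].
Qed.

Lemma filter_flat (F : nat -> seq (nat * nat)) (m : seq nat) (a : pred (nat * nat)) (P : pred nat) :
  (forall k, 2 <= k -> ~~ P k -> [seq z <- F k | a z] = [::]) ->
  all (fun k => 2 <= k) m ->
  [seq z <- flatten (map F m) | a z] = [seq z <- flatten (map F [seq k <- m | P k]) | a z].
Proof.
move=> HF; elim: m => [|k m IH] //= /andP[k2 mA].
case Pk: (P k) => /=; rewrite !filter_cat IH //.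
by rewrite HF // Pk.
Qed.

Lemma filter_W (m : seq nat) (a : pred (nat * nat)) (P : pred nat) :
  all (fun k => 2 <= k) m -> (forall z, a z -> (z.1 < 2) || P z.1) ->
  [seq z <- W m | a z] = [seq z <- W [seq k <- m | P k] | a z].
Proof.
move=> mA Ha.
have Hk : forall k c, 2 <= k -> ~~ P k -> a (k, c) = false.
  move=> k c k2 nP; apply/negP => /Ha /=; rewrite (negbTE nP) orbF; lia.
have Hmap : [seq z <- [seq (k, 0) | k <- m] | a z] =
            [seq z <- [seq (k, 0) | k <- [seq k <- m | P k]] | a z].
  elim: m mA => [|k m IH] //= /andP[k2 mA].
  case Pk: (P k) => /=; rewrite IH //.
  by rewrite (Hk k 0 k2) ?Pk.
rewrite /W !filter_cat Hmap.
rewrite (@filter_flat (fun k => [:: (k,0); (k,1)]) m a P) //; last first.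
  by move=> k k2 nP /=; rewrite !Hk.
rewrite (@filter_flat (fun k => [:: (k,1); (k,0)]) m a P) //.
by move=> k k2 nP /=; rewrite !Hk.
Qed.

Lemma W_mem z m : z \in W m -> (z.1 \in [:: 0, 1 & m]) && (z.2 < 2).
Proof.
rewrite /W !mem_cat => /orP[|/orP[|/orP[|/orP[|]]]].
- by move/flatten_mapP => [k km]; rewrite !inE => /orP[] /eqP -> /=; rewrite km !orbT.
- by rewrite !inE => /or3P[] /eqP ->.
- by move/mapP => [k km ->] /=; rewrite !inE km !orbT.
- by rewrite !inE => /or3P[] /eqP ->.
- by move/flatten_mapP => [k km]; rewrite !inE => /orP[] /eqP -> /=; rewrite km !orbT.
Qed.

Lemma memW i c m : i \in [:: 0, 1 & m] -> c < 2 -> (i, c) \in W m.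
Proof.
move=> Hi Hc; rewrite /W !mem_cat.
have Hc' : (c == 0) || (c == 1) by case: c Hc => [|[|]].
move: Hi; rewrite !inE => /or3P[/eqP->|/eqP->|im].
- by case/orP: Hc' => /eqP ->; rewrite ?inE !eqxx ?orbT.
- by case/orP: Hc' => /eqP ->; rewrite ?inE !eqxx ?orbT.
- apply/orP; left; apply/flatten_mapP; exists i => //.
  by case/orP: Hc' => /eqP ->; rewrite !inE !eqxx ?orbT.
Qed.

Lemma map_W (phi : nat -> nat) m : phi 0 = 0 -> phi 1 = 1 ->
  map (fun z => (phi z.1, z.2)) (W m) = W (map phi m).
Proof.
move=> h0 h1; rewrite /W !map_cat !map_flatten -!map_comp /= h0 h1.
congr (_ ++ _ :: _ :: _ :: _ ++ _ :: _ :: _ :: _).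
all: try by rewrite map_comp.
all: try by rewrite -map_comp.
all: idtac.
Qed.

Lemma size_flat2 (A B : nat -> nat * nat) m : size (flatten [seq [:: A k; B k] | k <- m]) = 2 * size m.
Proof. elim: m => [|k m IH] //=; rewrite IH; lia. Qed.

Lemma size_W m : size (W m) = 5 * size m + 6.
Proof.
rewrite /W !size_cat (size_flat2 (fun k => (k,0)) (fun k => (k,1))) (size_flat2 (fun k => (k,1)) (fun k => (k,0))) /= size_map; lia.
Qed.

Definition Lk (k : nat) : seq (nat * nat) := [seq (i, c) | i <- iota 0 (k + 2), c <- iota 0 2].

Definition checkk (k : nat) : bool :=
  all (fun u => all (fun v => (u == v) || (Eg u v == alternate (W (iota 2 k)) u v)) (Lk k)) (Lk k).

Lemma checkk_ok k : k <= 2 -> checkk k.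
Proof. by case: k => [|[|[|]]] //; vm_compute. Qed.

Lemma map_index_iota (s : seq nat) : uniq s -> map (index^~ s) s = iota 0 (size s).
Proof.
elim: s => [|x s IH] //= /andP[xs us]; rewrite eqxx; congr (_ :: _).
have -> : iota 1 (size s) = map (addn 1) (iota 0 (size s)) by rewrite -iotaDl.
rewrite -IH // -map_comp.
apply/eq_in_map => y ys /=.
have -> : (x == y) = false by apply/negP => /eqP E; rewrite E ys in xs.
by rewrite add1n.
Qed.

Lemma main_nat m x y : uniq m -> all (fun k => 2 <= k) m ->
  x.1 \in [:: 0, 1 & m] -> y.1 \in [:: 0, 1 & m] -> x.2 < 2 -> y.2 < 2 -> x != y ->
  Eg x y = alternate (W m) x y.
Proof.
move=> um mA hx hy cx cy nxy.
pose P := fun k => (k == x.1) || (k == y.1).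
set m' := [seq k <- m | P k].
have E1 : alternate (W m) x y = alternate (W m') x y.
  rewrite !alternateE (@filter_W m _ P) //.
  by move=> z /orP[] /eqP -> ; rewrite /P eqxx ?orbT.
have um' : uniq m' := filter_uniq _ um.
have mA' : all (fun k => 2 <= k) m'.
  by apply/allP => k; rewrite mem_filter => /andP[_ km]; exact: (allP mA k km).
have sz : size m' <= 2.
  apply: (@uniq_leq_size _ m' [:: x.1; y.1] um') => k.
  by rewrite mem_filter !inE => /andP[].
have hx' : x.1 \in [:: 0, 1 & m'] by move: hx; rewrite !inE mem_filter /P eqxx.
have hy' : y.1 \in [:: 0, 1 & m'] by move: hy; rewrite !inE mem_filter /P eqxx orbT.
set s := [:: 0, 1 & m'].
have n0 : 0 \notin m' by apply/negP => /(allP mA').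
have n1 : 1 \notin m' by apply/negP => /(allP mA').
have us : uniq s by rewrite /s /= um' andbT !inE negb_or n0 n1.
pose phi := index^~ s.
pose f := fun z : nat * nat => (phi z.1, z.2).
have injphi : {in s &, injective phi} := index_inj 0 (s:=s).
have Hs : forall z, z \in x :: y :: W m' -> z.1 \in s.
  by move=> z; rewrite !inE => /orP[/eqP->|/orP[/eqP->|/W_mem/andP[]]].
have injf : {in x :: y :: W m' &, injective f}.
  move=> [a b] [c d] /Hs /= ha /Hs /= hc; rewrite /f /=; case=> /(injphi _ _ ha hc) -> -> //.
have mphi : map phi m' = iota 2 (size m').
  by have := map_index_iota us; rewrite /s /= => -[].
rewrite E1 -(alt_map injf) (@map_W phi) // mphi.
have Egf : Eg x y = Eg (f x) (f y).
  have eqphi : (phi x.1 == phi y.1) = (x.1 == y.1) := inj_in_eq injphi hx' hy'.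
  by rewrite /Eg /f /=; move: eqphi => /= ->.
have memL : forall z, z \in x :: y :: W m' -> z.2 < 2 -> f z \in Lk (size m').
  move=> z /Hs zs z2; rewrite /f /Lk; apply: allpairs_f; rewrite mem_iota //=.
  by rewrite add0n addn2 -[(size m').+2]/(size s) /phi index_mem.
have fxy : f x != f y.
  apply/negP => /eqP /injf H.
  have : x = y by apply: H; rewrite !inE eqxx ?orbT.
  by move/eqP; rewrite (negbTE nxy).
have hxin : x \in [:: x, y & W m'] by rewrite inE eqxx.
have hyin : y \in [:: x, y & W m'] by rewrite !inE eqxx orbT.
have Hc := allP (allP (checkk_ok sz) (f x) (memL x hxin cx)) (f y) (memL y hyin cy).
by move: Hc; rewrite /= (negbTE fxy) /= => /eqP <-.
Qed.

Lemma in_small (n' i : nat) : i < n'.+2 -> i \in [:: 0, 1 & iota 2 n'].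
Proof. by move=> H; rewrite !inE mem_iota; lia. Qed.

Theorem mainTheorem5 (n : nat) (hn : 2 <= n) :
  exists w : seq ('I_n * 'I_2),
    represents (cartprod (@Kn n) (@Kn 2)) w /\ size w <= 5 * n - 4.
Proof.
case: n hn => [|[|n']] // _.
set Wn := W (iota 2 n').
pose g := fun z : nat * nat => ((inord z.1 : 'I_n'.+2), (inord z.2 : 'I_2)).
pose h := fun p : 'I_n'.+2 * 'I_2 => ((p.1 : nat), (p.2 : nat)).
exists (map g Wn).
have hinj : injective h.
  by move=> [a b] [c d]; rewrite /h /= => -[/val_inj -> /val_inj ->].
have hg : map h (map g Wn) = Wn.
  rewrite -map_comp; apply: map_id_in => z /W_mem /andP[z1 z2].
  have z1' : z.1 < n'.+2 by move: z1; rewrite !inE mem_iota; lia.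
  by rewrite /h /g /= !inordK //; case: z {z1 z2} z1'.
have gh : forall x, g (h x) = x.
  by move=> [a b]; rewrite /g /h /= !inord_val.
split; last by rewrite size_map size_W size_iota; lia.
split.
- move=> x; rewrite -(gh x); apply: map_f; rewrite /Wn.
  apply: memW => /=; last exact: ltn_ord.
  exact: in_small (ltn_ord _).
- move=> x y nxy.
  rewrite -(alt_map (f:=h)); last by move=> a b _ _; apply: hinj.
  rewrite hg /Wn -main_nat.
  + by case: x y {nxy} => [a b] [c d]; rewrite /cartprod /Kn /Eg /=.
  + exact: iota_uniq.
  + by apply/allP => k; rewrite mem_iota; lia.
  + exact: in_small (ltn_ord _).
  + exact: in_small (ltn_ord _).
  + exact: ltn_ord.
  + exact: ltn_ord.
  + by rewrite (inj_eq hinj).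
Qed.
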